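(* Let $\mathbf a\in\mathbb{R}^{\mathbb{N}}$. If the linear centrality $f^{\mathbf a}$ is rank monotone, then it is score monotone.
   Context: Graphs are finite directed graphs; $d_G(x,y)$ is the shortest directed path length from $x$ to $y$ ($\infty$ if none). The linear centrality is $f^{\mathbf a}_G(i)=\sum_{z\in V_G,\ d_G(z,i)<\infty}a_{d_G(z,i)}$. For a graph $G$ and distinct nodes $x,y$ with $(x,y)\notin E_G$, let $G'$ be $G$ with the arc $x\to y$ added. A centrality $f$ is score monotone if for all such $G,x,y$, $f_{G'}(y)>f_G(y)$. It is rank monotone if for all such $G,x,y$ and every node $w\ne y$: if $f_G(w)\le f_G(y)$ then $f_{G'}(w)<f_{G'}(y)$. *)

(* Defs.v *)
From HB Require Import structures.
From mathcomp Require Import all_boot all_order all_algebra.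
From mathcomp Require Import reals.
Set Implicit Arguments. Unset Strict Implicit. Unset Printing Implicit Defensive.
Import Order.TTheory GRing.Theory Num.Theory.
Local Open Scope ring_scope.

Definition digraph (n : nat) := rel 'I_n.

Fixpoint walk (n : nat) (e : digraph n) (k : nat) (z i : 'I_n) : bool :=
  match k with
  | 0 => z == i
  | k'.+1 => [exists w : 'I_n, e z w && walk e k' w i]
  end.

(* d_G(z,i): length of a shortest directed path from z to i (Some d),
   or None (= infinity) if there is none.  A shortest walk is a path and has
   length < n, so searching lengths 0..n-1 is exhaustive. *)
Definition dist (n : nat) (e : digraph n) (z i : 'I_n) : option nat :=
  let k := find (fun k => walk e k z i) (iota 0 n) in
  if (k < n)%N then Some k else None.

Definition centrality (R : realType) := forall n : nat, digraph n -> 'I_n -> R.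

Definition linear_centrality (R : realType) (a : nat -> R) : centrality R :=
  fun n e i => \sum_(z : 'I_n)
     match dist e z i with Some d => a d | None => 0 end.

Definition add_arc (n : nat) (e : digraph n) (x y : 'I_n) : digraph n :=
  fun u v => e u v || ((u == x) && (v == y)).

Definition score_monotone (R : realType) (f : centrality R) : Prop :=
  forall (n : nat) (e : digraph n) (x y : 'I_n),
    x != y -> ~~ e x y -> f n e y < f n (add_arc e x y) y.

Definition rank_monotone (R : realType) (f : centrality R) : Prop :=
  forall (n : nat) (e : digraph n) (x y : 'I_n),
    x != y -> ~~ e x y ->
    forall w : 'I_n, w != y ->
      f n e w <= f n e y -> f n (add_arc e x y) w < f n (add_arc e x y) y.

(* Main.v *)
Require Import Defs.
From mathcomp Require Import all_boot all_order all_algebra reals.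
Set Implicit Arguments. Unset Strict Implicit. Unset Printing Implicit Defensive.
Import Order.TTheory GRing.Theory Num.Theory.
Local Open Scope ring_scope.

Definition dunion n (e1 e2 : digraph n) : digraph (n + n) := fun u v =>
  match split u, split v with
  | inl a, inl b => e1 a b | inr a, inr b => e2 a b | _, _ => false end.

Definition wsum n (e1 e2 : digraph n) k (s1 s2 : 'I_n + 'I_n) : bool :=
  match s1, s2 with
  | inl a, inl b => walk e1 k a b | inr a, inr b => walk e2 k a b | _, _ => false end.

Lemma split_l n (a : 'I_n) : split (lshift n a) = inl a.
Proof. exact: (unsplitK (inl a)). Qed.
Lemma split_r n (a : 'I_n) : split (rshift n a) = inr a.
Proof. exact: (unsplitK (inr a)). Qed.

Lemma walk_dunion n (e1 e2 : digraph n) k (s1 s2 : 'I_n + 'I_n) :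
  walk (dunion e1 e2) k (unsplit s1) (unsplit s2) = wsum e1 e2 k s1 s2.
Proof.
elim: k s1 s2 => [|k IH] s1 s2.
  by rewrite /= (inj_eq (can_inj unsplitK)); case: s1; case: s2.
rewrite /=.
apply/existsP/idP.
- case=> w; rewrite -(splitK w); case: (split w) => c;
  rewrite IH /dunion !unsplitK; case: s1 => a; case: s2 => b //=; rewrite ?andbF //;
  by move=> H; apply/existsP; exists c.
- case: s1 => a; case: s2 => b //= /existsP [c Hc].
  + by exists (unsplit (inl c)); rewrite (IH (inl c) (inl b)) /dunion !split_l.
  + by exists (unsplit (inr c)); rewrite (IH (inr c) (inr b)) /dunion !split_r.
Qed.



Lemma walk_path n (e : digraph n) k z i :
  walk e k z i -> exists p, [/\ path e z p, size p = k & last z p = i].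
Proof.
elim: k z => [|k IH] z /=.
  by move=> /eqP ->; exists [::].
case/existsP=> w /andP [ezw /IH [p [Hp Hs Hl]]].
by exists (w :: p); rewrite /= ezw Hp Hs Hl.
Qed.

Lemma path_walk n (e : digraph n) z p : path e z p -> walk e (size p) z (last z p).
Proof.
elim: p z => [|w p IH] z /=; first by [].
by case/andP=> ezw Hp; apply/existsP; exists w; rewrite ezw IH.
Qed.

Lemma walk_short n (e : digraph n) k z i :
  walk e k z i -> exists2 k', (k' < n)%N & walk e k' z i.
Proof.
case/walk_path=> p [Hp _ <-].
case: (shortenP Hp) => p' Hp' Hu _.
exists (size p'); last exact: path_walk.
have := card_uniqP Hu; have := max_card (mem (z :: p')).
by rewrite card_ord /= => H1 H2; rewrite H2 /= in H1.
Qed.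

Lemma dist_pad n (e : digraph n) z i m : (n <= m)%N ->
  (if (find (fun k => walk e k z i) (iota 0 m) < m)%N
   then Some (find (fun k => walk e k z i) (iota 0 m)) else None) = dist e z i.
Proof.
move=> Hnm; rewrite /dist /=.
have Em : iota 0 m = iota 0 n ++ iota n (m - n) by rewrite -{1}(subnKC Hnm) iotaD.
case Hh: (has (fun k => walk e k z i) (iota 0 n)).
  have Hf := Hh; rewrite has_find size_iota in Hf.
  rewrite Em find_cat Hh Hf (leq_trans Hf Hnm) //.
have Hall : forall k, ~~ walk e k z i.
  move=> k; apply/negP => /walk_short [k' Hk' Hw].
  by move/negP: Hh; apply; apply/hasP; exists k'; rewrite // mem_iota.
rewrite !hasNfind ?size_iota ?ltnn //.
  by apply/hasPn => k _; apply: Hall.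
by apply/hasPn => k _; apply: Hall.
Qed.

Definition dsum n (e1 e2 : digraph n) (s1 s2 : 'I_n + 'I_n) : option nat :=
  match s1, s2 with
  | inl a, inl b => dist e1 a b | inr a, inr b => dist e2 a b | _, _ => None end.

Lemma dist_dunion n (e1 e2 : digraph n) (s1 s2 : 'I_n + 'I_n) :
  dist (dunion e1 e2) (unsplit s1) (unsplit s2) = dsum e1 e2 s1 s2.
Proof.
rewrite /dist /= (eq_find (fun k => walk_dunion e1 e2 k s1 s2)).
have Hn : (n <= n + n)%N by rewrite leq_addr.
case: s1 => a; case: s2 => b /=; try exact: dist_pad.
  by rewrite hasNfind ?size_iota ?ltnn //; apply/hasPn.
by rewrite hasNfind ?size_iota ?ltnn //; apply/hasPn.
Qed.

Lemma lc_l (R : realType) (a : nat -> R) n (e1 e2 : digraph n) y :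
  linear_centrality a (dunion e1 e2) (lshift n y) = linear_centrality a e1 y.
Proof.
rewrite /linear_centrality big_split_ord /=.
rewrite [X in _ + X]big1 ?addr0.
  by apply: eq_bigr => z _; rewrite (dist_dunion e1 e2 (inl z) (inl y)).
by move=> z _; rewrite (dist_dunion e1 e2 (inr z) (inl y)).
Qed.

Lemma lc_r (R : realType) (a : nat -> R) n (e1 e2 : digraph n) y :
  linear_centrality a (dunion e1 e2) (rshift n y) = linear_centrality a e2 y.
Proof.
rewrite /linear_centrality big_split_ord /=.
rewrite [X in X + _]big1 ?add0r.
  by apply: eq_bigr => z _; rewrite (dist_dunion e1 e2 (inr z) (inr y)).
by move=> z _; rewrite (dist_dunion e1 e2 (inl z) (inr y)).
Qed.

Lemma walk_ext n (e1 e2 : digraph n) : e1 =2 e2 -> forall k z i, walk e1 k z i = walk e2 k z i.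
Proof.
move=> E; elim=> [|k IH] z i //=.
by apply: eq_existsb => w; rewrite E IH.
Qed.

Lemma lc_ext (R : realType) (a : nat -> R) n (e1 e2 : digraph n) y :
  e1 =2 e2 -> linear_centrality a e1 y = linear_centrality a e2 y.
Proof.
move=> E; apply: eq_bigr => z _; rewrite /dist.
by rewrite (eq_find (fun k => walk_ext E k z y)).
Qed.

Lemma add_arc_dunion n (e : digraph n) x y :
  add_arc (dunion e e) (lshift n x) (lshift n y) =2 dunion (add_arc e x y) e.
Proof.
move=> u v; rewrite /add_arc -(splitK u) -(splitK v).
case: (split u) => a; case: (split v) => b;
  rewrite /dunion !unsplitK /= ?eq_shift ?andbF ?orbF //.
Qed.

Theorem lemma1 (R : realType) (a : nat -> R) :
  rank_monotone (linear_centrality a) -> score_monotone (linear_centrality a).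
Proof.
move=> RM n e x y Hxy Hexy.
have := RM _ (dunion e e) (lshift n x) (lshift n y) _ _ (rshift n y).
rewrite !(lc_ext a _ (add_arc_dunion e x y)) lc_l lc_r lc_l lc_r; apply => //.
- by rewrite /dunion !split_l.
- by rewrite eq_rlshift.
Qed.
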